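(* Let $a,b,d>0$, $c>c_-$, $\phi(x)=\frac{ax^3+bx^2+cx+d}{x^3}$ ($x>0$), and let $(p,q)$ be a 2-cycle of $\phi$ with $p<q$. \begin{description} \item[(a)] If $\phi$ has a unique equilibrium $\overline{t}$, then $p<\overline{t}<q$. \item[(b)] If $\phi$ has two equilibria $\overline{t}_1<\overline{t}_2$, then for $c=c_m$ one of the following holds: $$p<\overline{t}_1<q<\overline{t}_2,\quad\text{or}\quad p<\overline{t}_1,\ q>\overline{t}_2;$$ and for $c=c_M$ one has $p<\overline{t}_1$, $q>\overline{t}_2$. \item[(c)] If $\phi$ has three equilibria $\overline{t}_1<\overline{t}_2<\overline{t}_3$, then one of the following holds: $$p<\overline{t}_1<q<\overline{t}_2,\quad\text{or}\quad p<\overline{t}_1,\ q>\overline{t}_3.$$ \end{description}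
   Context: $c_-$ is the unique negative zero of $Q(x)=4ax^3-b^2x^2-18abd\,x+27a^2d^2+4db^3$. A 2-cycle is a pair $(p,q)$ of positive numbers with $p\neq q$, $\phi(p)=q$, $\phi(q)=p$; an equilibrium is $t>0$ with $\phi(t)=t$, equivalently a positive root of $P(t)=t^4-at^3-bt^2-ct-d$. Let $c^*=-\sqrt{3bd}$ and let $c_b$ be the unique negative root of $H(x)=108x^2+(108ab+27a^3)x-9a^2b^2-32b^3$. When $c_b<\frac{b^2-12d}{3a}$, as the parameter $c$ increases from $c_b$ (with $a,b,d$ fixed), $P$ first acquires a positive double root $t_m$ at a local minimum of $P$, and later a positive double root $t_M$ at a local maximum of $P$; $c_m$ and $c_M$ denote the corresponding values of $c$. Two equilibria occur only for $c=c_m$ or $c=c_M$. *)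

(* Defs.v *)
From HB Require Import structures.
From mathcomp Require Import all_boot all_order all_algebra.
Set Implicit Arguments. Unset Strict Implicit. Unset Printing Implicit Defensive.
Import Order.TTheory GRing.Theory Num.Theory.
Local Open Scope ring_scope.

Section Defs.
Variable R : rcfType.

Definition phi (a b c d x : R) : R :=
  (a * x ^+ 3 + b * x ^+ 2 + c * x + d) / x ^+ 3.

Definition equilibrium (a b c d t : R) : Prop := 0 < t /\ phi a b c d t = t.

Definition two_cycle (a b c d p q : R) : Prop :=
  [/\ 0 < p, 0 < q, p != q, phi a b c d p = q & phi a b c d q = p].

Definition Ppoly (a b c d : R) : {poly R} :=
  'X^4 - a%:P * 'X^3 - b%:P * 'X^2 - c%:P * 'X - d%:P.

Definition Qpoly (a b d : R) : {poly R} :=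
  (4 * a)%:P * 'X^3 - (b ^+ 2)%:P * 'X^2 - (18 * a * b * d)%:P * 'X
  + (27 * a ^+ 2 * d ^+ 2 + 4 * d * b ^+ 3)%:P.

Definition Hpoly (a b : R) : {poly R} :=
  108%:P * 'X^2 + (108 * a * b + 27 * a ^+ 3)%:P * 'X
  - (9 * a ^+ 2 * b ^+ 2 + 32 * b ^+ 3)%:P.

Definition is_cb (a b x : R) : Prop := x < 0 /\ root (Hpoly a b) x.

Definition local_min (f : R -> R) (t : R) : Prop :=
  exists2 e : R, 0 < e & forall x, `|x - t| < e -> f t <= f x.
Definition local_max (f : R -> R) (t : R) : Prop :=
  exists2 e : R, 0 < e & forall x, `|x - t| < e -> f x <= f t.

Definition dbl_root_min (a b c d t : R) : Prop :=
  [/\ 0 < t, root (Ppoly a b c d) t, root (Ppoly a b c d)^`() t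
    & local_min (fun x => (Ppoly a b c d).[x]) t].
Definition dbl_root_max (a b c d t : R) : Prop :=
  [/\ 0 < t, root (Ppoly a b c d) t, root (Ppoly a b c d)^`() t
    & local_max (fun x => (Ppoly a b c d).[x]) t].

Definition is_cm (a b d c : R) : Prop :=
  exists cb, [/\ is_cb a b cb, cb < (b ^+ 2 - 12 * d) / (3 * a), cb <= c,
    exists t, dbl_root_min a b c d t
    & forall c', cb <= c' -> c' < c -> ~ exists t, dbl_root_min a b c' d t].

Definition is_cM (a b d c : R) : Prop :=
  exists cb, [/\ is_cb a b cb, cb < (b ^+ 2 - 12 * d) / (3 * a), cb <= c,
    exists t, dbl_root_max a b c d t
    & forall c', cb <= c' -> c' < c -> ~ exists t, dbl_root_max a b c' d t].

End Defs.

(* Main.v *)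
Require Import Defs.
From HB Require Import structures.
From mathcomp Require Import all_boot all_order all_algebra.
From mathcomp Require Import ring lra.
Import Order.TTheory GRing.Theory Num.Theory.
Local Open Scope ring_scope.

Section Aux.
Variable R : rcfType.
Implicit Types a b c d x y p q : R.

Definition Pv a b c d x : R := x ^+ 4 - a * x ^+ 3 - b * x ^+ 2 - c * x - d.

Lemma hornerP a b c d x : (Ppoly a b c d).[x] = Pv a b c d x.
Proof. rewrite /Ppoly /Pv !hornerE; ring. Qed.

Lemma phi_iff a b c d x y : 0 < x ->
  (phi a b c d x = y <-> a * x ^+ 3 + b * x ^+ 2 + c * x + d = y * x ^+ 3).
Proof.
move=> x0; have h3 : x ^+ 3 != 0 by rewrite expf_neq0 // gt_eqF.
rewrite /phi; split=> [<-|h]; first by rewrite divfK.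
by rewrite h mulfK.
Qed.

Lemma equil_iff a b c d t : equilibrium a b c d t <-> 0 < t /\ Pv a b c d t = 0.
Proof.
rewrite /equilibrium; split=> -[t0 h]; split=> //.
  move/(phi_iff _ _ _ _ _ _ t0): h => h; rewrite /Pv.
  have -> : t ^+ 4 = t * t ^+ 3 by ring.
  rewrite -h; ring.
apply/(phi_iff _ _ _ _ _ _ t0); move: h; rewrite /Pv => h.
have e : a*t^+3 + b*t^+2 + c*t + d = t*t^+3 - (t^+4 - a*t^+3 - b*t^+2 - c*t - d) by ring.
by rewrite e h subr0.
Qed.

Lemma Pneg a b c d p q x : 0 < a -> 0 < d -> 0 < p -> p < q ->
  a * p ^+ 3 + b * p ^+ 2 + c * p + d = q * p ^+ 3 ->
  a * q ^+ 3 + b * q ^+ 2 + c * q + d = p * q ^+ 3 ->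
  0 < x -> x <= p -> Pv a b c d x < 0.
Proof.
move=> a0 d0 p0 pq Ep Eq x0 xp.
have pq0 : p - q != 0 by rewrite subr_eq0 lt_eqF.
have hc : c = p * q * (p + q) - a * (p ^+ 2 + p * q + q ^+ 2) - b * (p + q).
  apply: (mulfI pq0).
  have : (a * p ^+ 3 + b * p ^+ 2 + c * p + d) - (a * q ^+ 3 + b * q ^+ 2 + c * q + d)
       = q * p ^+ 3 - p * q ^+ 3 by rewrite Ep Eq.
  move=> h; apply/eqP; rewrite -subr_eq0; apply/eqP.
  have -> : (p - q) * c - (p - q) * (p * q * (p + q) - a * (p ^+ 2 + p * q + q ^+ 2) - b * (p + q))
    = (a * p ^+ 3 + b * p ^+ 2 + c * p + d) - (a * q ^+ 3 + b * q ^+ 2 + c * q + d)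
      - (q * p ^+ 3 - p * q ^+ 3) by ring.
  by rewrite h subrr.
have hd : d = q * p ^+ 3 - a * p ^+ 3 - b * p ^+ 2 - c * p.
  by rewrite -Ep; ring.
have q0 : 0 < q by apply: lt_trans pq.
have hid : p * q * Pv a b c d x
   = p * q * x ^+ 2 * (x ^+ 2 - p * q) - (p - x) * (q - x) * (a * p * q * x + d).
  rewrite /Pv [in RHS]hd hd [in RHS]hc hc; ring.
have pq_pos : 0 < p * q by rewrite mulr_gt0.
rewrite -(pmulr_rlt0 _ pq_pos) hid.
have h1 : p * q * x ^+ 2 * (x ^+ 2 - p * q) < 0.
  rewrite pmulr_rlt0; last by rewrite mulr_gt0 // exprn_gt0.
  rewrite subr_lt0 expr2; apply: (le_lt_trans (y := p * x)).
    by rewrite ler_pM2r.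
  by rewrite ltr_pM2l // (le_lt_trans xp).
have h2 : 0 <= (p - x) * (q - x) * (a * p * q * x + d).
  rewrite !mulr_ge0 //; first by rewrite subr_ge0.
    by rewrite subr_ge0 ltW // (le_lt_trans xp).
  by rewrite addr_ge0 ?ltW // !mulr_gt0.
lra.
Qed.


Lemma ivt_up a b c d x y : x < y -> Pv a b c d x < 0 -> 0 < Pv a b c d y ->
  exists2 z, x < z < y & Pv a b c d z = 0.
Proof.
move=> xy hx hy.
have [z /andP[xz zy] rz] := @poly_ivt R (Ppoly a b c d) x y (ltW xy)
  (ltac:(by rewrite !hornerP (ltW hx) (ltW hy)) : (Ppoly a b c d).[x] <= 0 <= (Ppoly a b c d).[y]).
move/eqP: rz; rewrite hornerP => rz.
exists z => //; apply/andP; split.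
  by rewrite lt_neqAle xz andbT; apply/eqP => exz; move: hx; rewrite exz rz ltxx.
by rewrite lt_neqAle zy andbT; apply/eqP => exz; move: hy; rewrite -exz rz ltxx.
Qed.

Lemma ivt_down a b c d x y : x < y -> 0 < Pv a b c d x -> Pv a b c d y < 0 ->
  exists2 z, x < z < y & Pv a b c d z = 0.
Proof.
move=> xy hx hy.
have hx' : (- Ppoly a b c d).[x] <= 0 by rewrite hornerN hornerP oppr_le0 ltW.
have hy' : 0 <= (- Ppoly a b c d).[y] by rewrite hornerN hornerP oppr_ge0 ltW.
have [z /andP[xz zy] rz] := @poly_ivt R (- Ppoly a b c d) x y (ltW xy) (ltac:(by rewrite hx' hy')).
move/eqP: rz; rewrite hornerN hornerP => /eqP; rewrite oppr_eq0 => /eqP rz.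
exists z => //; apply/andP; split.
  by rewrite lt_neqAle xz andbT; apply/eqP => exz; move: hx; rewrite exz rz ltxx.
by rewrite lt_neqAle zy andbT; apply/eqP => exz; move: hy; rewrite -exz rz ltxx.
Qed.

Lemma fac3 a b c d t1 t2 t3 x : t1 < t2 -> t2 < t3 ->
  Pv a b c d t1 = 0 -> Pv a b c d t2 = 0 -> Pv a b c d t3 = 0 ->
  Pv a b c d x = (x - t1) * (x - t2) * (x - t3) * (x - (a - t1 - t2 - t3)).
Proof.
move=> h12 h23 e1 e2 e3.
pose C1 y := y ^+ 3 + y ^+ 2 * t1 + y * t1 ^+ 2 + t1 ^+ 3
   - a * (y ^+ 2 + y * t1 + t1 ^+ 2) - b * (y + t1) - c.
pose C2 y := y ^+ 2 + y * t2 + t2 ^+ 2 + t1 * (y + t2) + t1 ^+ 2 - a * (y + t2 + t1) - b.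
have E1 y : Pv a b c d y = Pv a b c d t1 + (y - t1) * C1 y by rewrite /Pv /C1; ring.
have E2 y z : C1 y = C1 z + (y - z) * (y ^+ 2 + y * z + z ^+ 2 + t1 * (y + z) + t1 ^+ 2
   - a * (y + z + t1) - b) by rewrite /C1; ring.
have n21 : t2 - t1 != 0 by rewrite subr_eq0 gt_eqF.
have n31 : t3 - t1 != 0 by rewrite subr_eq0 gt_eqF // (lt_trans h12).
have n32 : t3 - t2 != 0 by rewrite subr_eq0 gt_eqF.
have c12 : C1 t2 = 0.
  by move: (E1 t2); rewrite e1 e2 add0r => /esym/eqP; rewrite mulf_eq0 (negbTE n21) => /eqP.
have c13 : C1 t3 = 0.
  by move: (E1 t3); rewrite e1 e3 add0r => /esym/eqP; rewrite mulf_eq0 (negbTE n31) => /eqP.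
have c23 : C2 t3 = 0.
  by move: (E2 t3 t2); rewrite c12 c13 add0r => /esym/eqP; rewrite mulf_eq0 (negbTE n32) => /eqP.
rewrite E1 e1 add0r (E2 x t2) c12 add0r.
have -> : x ^+ 2 + x * t2 + t2 ^+ 2 + t1 * (x + t2) + t1 ^+ 2 - a * (x + t2 + t1) - b
  = C2 t3 + (x - t3) * (x - (a - t1 - t2 - t3)) by rewrite /C2; ring.
rewrite c23 add0r; ring.
Qed.

End Aux.
Arguments Pv {R}.
Arguments hornerP {R}.
Arguments phi_iff {R}.
Arguments equil_iff {R}.
Arguments Pneg {R a b c d p q x}.
Arguments ivt_up {R a b c d x y}.
Arguments ivt_down {R a b c d x y}.
Arguments fac3 {R a b c d t1 t2 t3} x.


Theorem lemma4 (R : rcfType) (a b c d p q : R) :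
  0 < a -> 0 < b -> 0 < d ->
  (* c > c_-, c_- being the unique negative zero of Q *)
  (forall cm : R, cm < 0 -> root (Qpoly a b d) cm -> cm < c) ->
  two_cycle a b c d p q -> p < q ->
  [/\
   (* (a) unique equilibrium *)
   (forall t, (forall x, equilibrium a b c d x <-> x = t) -> p < t < q),
   (* (b) exactly two equilibria *)
   (forall t1 t2, t1 < t2 ->
      (forall x, equilibrium a b c d x <-> x = t1 \/ x = t2) ->
      (is_cm a b d c -> (p < t1 /\ t1 < q /\ q < t2) \/ (p < t1 /\ t2 < q)) /\
      (is_cM a b d c -> p < t1 /\ t2 < q))
   &
   (* (c) exactly three equilibria *)
   (forall t1 t2 t3, t1 < t2 -> t2 < t3 ->
      (forall x, equilibrium a b c d x <-> [\/ x = t1, x = t2 | x = t3]) ->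
      (p < t1 /\ t1 < q /\ q < t2) \/ (p < t1 /\ t3 < q))].
Proof.
move=> a0 b0 d0 _ [p0 q0 pneq Hp Hq] pq.
move/(@phi_iff R a b c d p q p0): Hp => Ep.
move/(@phi_iff R a b c d q p q0): Hq => Eq.
have Pn x : 0 < x -> x <= p -> Pv a b c d x < 0.
  by move=> x0 xp; apply: (Pneg a0 d0 p0 pq Ep Eq x0 xp).
have Pqpos : 0 < Pv a b c d q.
  have -> : Pv a b c d q = q ^+ 3 * (q - p).
    have -> : Pv a b c d q = q * q ^+ 3 - (a * q ^+ 3 + b * q ^+ 2 + c * q + d)
      by rewrite /Pv; ring.
    rewrite Eq; ring.
  by rewrite mulr_gt0 ?exprn_gt0 // subr_gt0.
have Pp : Pv a b c d p < 0 by apply: Pn.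
have [e /andP[pe eq'] Pe] := ivt_up pq Pp Pqpos.
have e0 : 0 < e by apply: lt_trans pe.
have eqe : equilibrium a b c d e by apply/equil_iff.
have gtp t : equilibrium a b c d t -> p < t.
  move/equil_iff=> [t0 Pt]; rewrite ltNge; apply/negP => tp.
  by move: (Pn t t0 tp); rewrite Pt ltxx.
have notroot x : 0 < x -> ~ equilibrium a b c d x -> Pv a b c d x != 0.
  by move=> x0 ne; apply/eqP => h; apply: ne; apply/equil_iff.
have qne t : equilibrium a b c d t -> q != t.
  by move/equil_iff=> [_ Pt]; apply/eqP => qt; move: Pqpos; rewrite qt Pt ltxx.
split.
- move=> t H; have := (H e).1 eqe => et; subst t.
  by rewrite pe.
- move=> t1 t2 h12 H.
  have eq1 : equilibrium a b c d t1 by apply/H; left.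
  have eq2 : equilibrium a b c d t2 by apply/H; right.
  have pt1 := gtp _ eq1.
  have t1q : t1 < q.
    case: ((H e).1 eqe) => [<-|ee] //; by apply: (lt_trans h12); rewrite -ee.
  have betw x : t1 < x -> x < t2 -> Pv a b c d x != 0.
    move=> h1 h2; apply: notroot; first by apply: lt_trans h1; apply: lt_trans pt1.
    by move/H => [] ex; move: h1 h2; rewrite ex ltxx // andbF.
  split.
    move=> _; case: (ltgtP q t2) => [qt2|t2q|qt2].
    + by left.
    + by right.
    + by move: (qne _ eq2); rewrite qt2 eqxx.
  move=> [cb [_ _ _ [t [t0 rt _ [eps eps0 lm]]] _]].
  move/eqP: rt; rewrite hornerP => rt.
  have eqt : equilibrium a b c d t by apply/equil_iff.
  split=> //.
  case: (ltgtP q t2) => [qt2|//|qt2]; last by move: (qne _ eq2); rewrite qt2 eqxx.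
  exfalso.
  have lmx x : `|x - t| < eps -> Pv a b c d x <= 0.
    by move=> h; move: (lm x h); rewrite !hornerP rt.
  case: ((H t).1 eqt) => et; subst t.
  +
    pose x := t1 + (if eps <= q - t1 then eps / 2 else (q - t1) / 2).
    have [h1 h2 h3] : [/\ t1 < x, x < q & `|x - t1| < eps].
      rewrite /x; case: ifP => hle.
        split; [lra|lra|]; rewrite ltr_norml; apply/andP; split; lra.
      move/negbT: hle; rewrite -ltNge => hle.
      split; [lra|lra|]; rewrite ltr_norml; apply/andP; split; lra.
    have Px : Pv a b c d x < 0.
      by rewrite lt_neqAle lmx // andbT betw //; apply: lt_trans qt2.
    have [z /andP[xz zq] Pz] := ivt_up h2 Px Pqpos.
    by move/eqP: Pz; apply/negP/betw; [apply: lt_trans xz|apply: lt_trans qt2].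
  +
    pose x := t2 - (if eps <= t2 - q then eps / 2 else (t2 - q) / 2).
    have [h1 h2 h3] : [/\ q < x, x < t2 & `|x - t2| < eps].
      rewrite /x; case: ifP => hle.
        split; [lra|lra|]; rewrite ltr_norml; apply/andP; split; lra.
      move/negbT: hle; rewrite -ltNge => hle.
      split; [lra|lra|]; rewrite ltr_norml; apply/andP; split; lra.
    have Px : Pv a b c d x < 0.
      by rewrite lt_neqAle lmx // andbT betw //; apply: lt_trans h1.
    have [z /andP[qz zx] Pz] := ivt_down h1 Pqpos Px.
    by move/eqP: Pz; apply/negP/betw; [apply: lt_trans qz|apply: lt_trans h2].
- move=> t1 t2 t3 h12 h23 H.
  have eq1 : equilibrium a b c d t1 by apply/H; apply: Or31.
  have eq2 : equilibrium a b c d t2 by apply/H; apply: Or32.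
  have eq3 : equilibrium a b c d t3 by apply/H; apply: Or33.
  have pt1 := gtp _ eq1.
  have t1q : t1 < q.
    case: ((H e).1 eqe) => [<-|ee|ee] //.
      by apply: (lt_trans h12); rewrite -ee.
    by apply: (lt_trans h12); apply: (lt_trans h23); rewrite -ee.
  case: (ltgtP q t2) => [qt2|t2q|qt2]; first by left.
    2: by move: (qne _ eq2); rewrite qt2 eqxx.
  case: (ltgtP q t3) => [qt3|t3q|qt3]; last by move: (qne _ eq3); rewrite qt3 eqxx.
    2: by right.
  exfalso.
  move/equil_iff: eq1 => [t10 P1]; move/equil_iff: eq2 => [t20 P2].
  move/equil_iff: eq3 => [t30 P3].
  set r := a - t1 - t2 - t3.
  have Fq := fac3 q h12 h23 P1 P2 P3.
  have F0 := fac3 0 h12 h23 P1 P2 P3.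
  have A : (q - t1) * (q - t2) * (q - t3) < 0.
    have A1 : 0 < (q - t1) * (q - t2) by rewrite mulr_gt0 // subr_gt0.
    by rewrite pmulr_rlt0 // subr_lt0.
  have rq : q < r.
    rewrite ltNge; apply/negP => rq.
    have : Pv a b c d q <= 0.
      by rewrite Fq; apply: mulr_le0_ge0; [exact: ltW | rewrite subr_ge0].
    by rewrite leNgt Pqpos.
  have : Pv a b c d 0 = - d by rewrite /Pv; ring.
  rewrite F0 => hF.
  have r0 : 0 < r by apply: lt_trans rq; apply: lt_trans t1q.
  have : 0 < (0 - t1) * (0 - t2) * (0 - t3) * (0 - r).
    have -> : (0 - t1) * (0 - t2) * (0 - t3) * (0 - r) = t1 * t2 * t3 * r by ring.
    by rewrite !mulr_gt0.
  rewrite hF; lra.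
Qed.
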